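(* Let $(x_i)_{i\in\mathbf Z}$ be an admissible frontier which is ultimately periodic, and let $t$ be the $SL_2$-tiling with values in $\mathbf N$ extending its embedding (as in Theorem 3). Then for every point $Q\in\mathbf Z^2$ and every nonzero vector $v=(a,b)\in\mathbf Z^2$ with $ab\le0$, the ray $(t(Q+nv))_{n\in\mathbf N}$ is $\mathbf N$-rational.
   Context: Cartesian coordinates on $\mathbf Z^2$ (first coordinate to the right, second upward). An $SL_2$-tiling is $t:\mathbf Z^2\to\mathbf N$ with $t(a,b+1)t(a+1,b)-t(a,b)t(a+1,b+1)=1$ for all $(a,b)$. A frontier is a bi-infinite word over $\{x,y\}$, admissible if neither $(x_n)_{n\ge0}$ nor $(x_n)_{n\le0}$ is ultimately constant; it is embedded as lattice points $P_i$ with $P_i-P_{i-1}=(1,0)$ if $x_i=x$, $(0,1)$ if $x_i=y$, and the tiling extends it if $t(P_i)=1$ for all $i$ (such a tiling exists and is unique). The frontier is ultimately periodic if there are $p\ge1$ and $n_0,n_0'\in\mathbf Z$ with $x_n=x_{n+p}$ for $n\ge n_0$ and $x_n=x_{n-p}$ for $n\le n_0'$. A sequence $(a_n)$ over $\mathbf N$ is $\mathbf N$-rational if $a_n=\lambda M^n\gamma$ for all $n$, for some $\lambda\in\mathbf N^{1\times r}$, $M\in\mathbf N^{r\times r}$, $\gamma\in\mathbf N^{r\times1}$. *)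

(* Defs.v *)
From HB Require Import structures.
From mathcomp Require Import all_boot all_order all_algebra.
Set Implicit Arguments. Unset Strict Implicit. Unset Printing Implicit Defensive.
Import Order.TTheory GRing.Theory Num.Theory.
Local Open Scope ring_scope.

Inductive letter := lx | ly.

Definition letter_eqb (a b : letter) : bool :=
  match a, b with lx, lx | ly, ly => true | _, _ => false end.

Definition frontier := int -> letter.

Definition point := (int * int)%type.

Definition padd (P Q : point) : point := (P.1 + Q.1, P.2 + Q.2).
Definition pscale (n : nat) (v : point) : point := (v.1 *+ n, v.2 *+ n).

Definition SL2_tiling (t : point -> nat) : Prop :=
  forall a b : int,
    (t (a, b + 1))%:Z * (t (a + 1, b))%:Z - (t (a, b))%:Z * (t (a + 1, b + 1))%:Z = 1.

Definition fwd_ult_const (x : frontier) : Prop :=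
  exists (N : int) (c : letter), forall n : int, N <= n -> x n = c.
Definition bwd_ult_const (x : frontier) : Prop :=
  exists (N : int) (c : letter), forall n : int, n <= N -> x n = c.

Definition admissible (x : frontier) : Prop :=
  ~ fwd_ult_const x /\ ~ bwd_ult_const x.

Definition ult_periodic (x : frontier) : Prop :=
  exists (p : nat) (n0 n0' : int), (1 <= p)%N /\
    (forall n : int, n0 <= n -> x n = x (n + p%:Z)) /\
    (forall n : int, n <= n0' -> x n = x (n - p%:Z)).

Definition step (l : letter) : point :=
  match l with lx => (1, 0) | ly => (0, 1) end.

Definition embedding (x : frontier) (P : int -> point) : Prop :=
  forall i : int, P i = padd (P (i - 1)) (step (x i)).

Definition extends (t : point -> nat) (P : int -> point) : Prop :=
  forall i : int, t (P i) = 1%N.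

Definition N_rational (a : nat -> nat) : Prop :=
  exists (r : nat) (lambda : 'rV[nat]_r) (M : 'M[nat]_r) (gamma : 'cV[nat]_r),
    forall n : nat, a n = (lambda *m iter n (mulmx M) gamma) 0 0.

(* Main.v *)
Require Import Defs.
From Stdlib Require Import Arith ZArith Lia Classical ClassicalEpsilon FunctionalExtensionality.
Open Scope Z_scope.

Definition dxl (l : letter) : Z := match l with lx => 1 | ly => 0 end.
Definition dyl (l : letter) : Z := match l with lx => 0 | ly => 1 end.
Lemma dl_sum l : dxl l + dyl l = 1. Proof. destruct l; reflexivity. Qed.
Lemma dxl_b l : 0 <= dxl l <= 1. Proof. destruct l; simpl; lia. Qed.
Lemma dyl_b l : 0 <= dyl l <= 1. Proof. destruct l; simpl; lia. Qed.

Record M2 := mk2 { a11 : nat; a12 : nat; a21 : nat; a22 : nat }.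
Definition mmul (A B : M2) := mk2 (a11 A * a11 B + a12 A * a21 B)%nat (a11 A * a12 B + a12 A * a22 B)%nat
  (a21 A * a11 B + a22 A * a21 B)%nat (a21 A * a12 B + a22 A * a22 B)%nat.
Definition mid := mk2 1 0 0 1.
Definition mu (l : letter) := match l with lx => mk2 1 1 0 1 | ly => mk2 1 0 1 1 end.
Definition out (A : M2) := (a21 A + a22 A)%nat.
Definition unimod A := (a11 A * a22 A = a12 A * a21 A + 1)%nat.

Lemma mmul_assoc A B C : mmul A (mmul B C) = mmul (mmul A B) C.
Proof. destruct A, B, C; unfold mmul; simpl; f_equal; ring. Qed.
Lemma mmul_idl A : mmul mid A = A.
Proof. destruct A; unfold mmul; simpl; f_equal; ring. Qed.
Lemma mmul_idr A : mmul A mid = A.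
Proof. destruct A; unfold mmul; simpl; f_equal; ring. Qed.
Lemma unimod_mul A B : unimod A -> unimod B -> unimod (mmul A B).
Proof. destruct A as [p q r s], B as [p' q' r' s']; unfold unimod, mmul; simpl; intros H1 H2. nia. Qed.
Lemma unimod_mu l : unimod (mu l). Proof. destruct l; reflexivity. Qed.
Lemma unimod_id : unimod mid. Proof. reflexivity. Qed.

Lemma key_alg (M : M2) (al be : nat) : unimod M ->
  (out M * out (mmul (mk2 1 al 0 1) (mmul (mu ly) (mmul M (mmul (mu lx) (mk2 1 0 be 1)))))
   = 1 + out (mmul (mk2 1 al 0 1) (mmul (mu ly) M)) * out (mmul M (mmul (mu lx) (mk2 1 0 be 1))))%nat.
Proof. destruct M as [p q r s]; unfold unimod, out, mmul; simpl; intros H. nia. Qed.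

Fixpoint grun (sg : Z*Z -> Z*Z) (A B : Z*Z -> M2) (s0 : Z*Z) (C0 : M2) (n : nat) : (Z*Z)*M2 :=
  match n with O => (s0, C0) | S n => let r := grun sg A B s0 C0 n in
    (sg (fst r), mmul (A (fst r)) (mmul (snd r) (B (fst r)))) end.
Definition inb (p : Z) (s : Z * Z) := 0 <= fst s < p /\ 0 <= snd s < p.
Definition auto_seq (f : nat -> nat) : Prop :=
  exists (p : Z) (N : nat) (sg : Z*Z -> Z*Z) (A B : Z*Z -> M2) (s0 : Z*Z) (C0 : M2),
    1 <= p /\ inb p s0 /\ (forall s, inb p s -> inb p (sg s)) /\
    forall n, f (N + n)%nat = out (snd (grun sg A B s0 C0 n)).
Section ZW.
Variable x : Z -> letter.
Variable P : Z -> Z * Z.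
Hypothesis Hemb : forall k, P k = (fst (P (k-1)) + dxl (x k), snd (P (k-1)) + dyl (x k)).
Hypothesis Hinf : forall N, (exists k, N <= k /\ x k = lx) /\ (exists k, N <= k /\ x k = ly)
  /\ (exists k, k <= N /\ x k = lx) /\ (exists k, k <= N /\ x k = ly).

Definition X k := fst (P k).
Definition Y k := snd (P k).
Lemma X_step k : X k = X (k-1) + dxl (x k).
Proof. unfold X. rewrite (Hemb k) at 1. reflexivity. Qed.
Lemma Y_step k : Y k = Y (k-1) + dyl (x k).
Proof. unfold Y. rewrite (Hemb k) at 1. reflexivity. Qed.
Lemma P_XY k : P k = (X k, Y k).
Proof. unfold X, Y; destruct (P k); reflexivity. Qed.

Lemma X_mono_nat k (n : nat) : X k <= X (k + Z.of_nat n).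
Proof.
  induction n. - replace (k + Z.of_nat 0) with k by lia; lia.
  - rewrite (X_step (k + Z.of_nat (S n))).
    replace (k + Z.of_nat (S n) - 1) with (k + Z.of_nat n) by lia.
    pose proof (dxl_b (x (k + Z.of_nat (S n)))); lia.
Qed.
Lemma Y_mono_nat k (n : nat) : Y k <= Y (k + Z.of_nat n).
Proof.
  induction n. - replace (k + Z.of_nat 0) with k by lia; lia.
  - rewrite (Y_step (k + Z.of_nat (S n))).
    replace (k + Z.of_nat (S n) - 1) with (k + Z.of_nat n) by lia.
    pose proof (dyl_b (x (k + Z.of_nat (S n)))); lia.
Qed.
Lemma X_mono k l : k <= l -> X k <= X l.
Proof. intros H. replace l with (k + Z.of_nat (Z.to_nat (l - k))) by lia. apply X_mono_nat. Qed.
Lemma Y_mono k l : k <= l -> Y k <= Y l.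
Proof. intros H. replace l with (k + Z.of_nat (Z.to_nat (l - k))) by lia. apply Y_mono_nat. Qed.
Lemma X_strict k l : k < l -> x l = lx -> X k < X l.
Proof. intros H Hl. rewrite (X_step l), Hl. simpl. pose proof (X_mono k (l-1)). lia. Qed.
Lemma Y_strict k l : k < l -> x l = ly -> Y k < Y l.
Proof. intros H Hl. rewrite (Y_step l), Hl. simpl. pose proof (Y_mono k (l-1)). lia. Qed.
Lemma XY_sum k : X k + Y k = X (k-1) + Y (k-1) + 1.
Proof. rewrite (X_step k), (Y_step k). pose proof (dl_sum (x k)). lia. Qed.

Lemma X_const_nat k (n : nat) : (forall m, k < m <= k + Z.of_nat n -> x m = ly) -> X k = X (k + Z.of_nat n).
Proof.
  induction n; intros H. - f_equal; lia.
  - rewrite (X_step (k + Z.of_nat (S n))).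
    replace (k + Z.of_nat (S n) - 1) with (k + Z.of_nat n) by lia.
    rewrite H by lia. simpl. rewrite <- IHn. lia. intros m Hm; apply H; lia.
Qed.
Lemma Y_const_nat k (n : nat) : (forall m, k < m <= k + Z.of_nat n -> x m = lx) -> Y k = Y (k + Z.of_nat n).
Proof.
  induction n; intros H. - f_equal; lia.
  - rewrite (Y_step (k + Z.of_nat (S n))).
    replace (k + Z.of_nat (S n) - 1) with (k + Z.of_nat n) by lia.
    rewrite H by lia. simpl. rewrite <- IHn. lia. intros m Hm; apply H; lia.
Qed.
Lemma X_const k l : k <= l -> (forall m, k < m <= l -> x m = ly) -> X k = X l.
Proof. intros H H'. replace l with (k + Z.of_nat (Z.to_nat (l - k))) by lia. apply X_const_nat.
  intros m Hm; apply H'; lia. Qed.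
Lemma Y_const k l : k <= l -> (forall m, k < m <= l -> x m = lx) -> Y k = Y l.
Proof. intros H H'. replace l with (k + Z.of_nat (Z.to_nat (l - k))) by lia. apply Y_const_nat.
  intros m Hm; apply H'; lia. Qed.

Lemma X_below : forall A, exists k, X k < A.
Proof.
  assert (H : forall m : nat, exists k, X k <= X 0 - Z.of_nat m).
  { induction m. - exists 0; lia.
    - destruct IHm as [k Hk]. destruct (Hinf k) as [_ [_ [[k' [Hk' Hx]] _]]].
      exists (k' - 1). pose proof (X_strict (k'-1) k' ltac:(lia) Hx). pose proof (X_mono k' k Hk'). lia. }
  intros A. destruct (H (Z.to_nat (X 0 - A + 1))) as [k Hk]. exists k. lia.
Qed.
Lemma X_above : forall A, exists k, A <= X k.
Proof.
  assert (H : forall m : nat, exists k, X 0 + Z.of_nat m <= X k).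
  { induction m. - exists 0; lia.
    - destruct IHm as [k Hk]. destruct (Hinf (k+1)) as [[k' [Hk' Hx]] _].
      exists k'. pose proof (X_strict k k' ltac:(lia) Hx). lia. }
  intros A. destruct (H (Z.to_nat (A - X 0))) as [k Hk]. exists k. lia.
Qed.
Lemma Y_below : forall A, exists k, Y k < A.
Proof.
  assert (H : forall m : nat, exists k, Y k <= Y 0 - Z.of_nat m).
  { induction m. - exists 0; lia.
    - destruct IHm as [k Hk]. destruct (Hinf k) as [_ [_ [_ [k' [Hk' Hx]]]]].
      exists (k' - 1). pose proof (Y_strict (k'-1) k' ltac:(lia) Hx). pose proof (Y_mono k' k Hk'). lia. }
  intros A. destruct (H (Z.to_nat (Y 0 - A + 1))) as [k Hk]. exists k. lia.
Qed.
Lemma Y_above : forall A, exists k, A <= Y k.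
Proof.
  assert (H : forall m : nat, exists k, Y 0 + Z.of_nat m <= Y k).
  { induction m. - exists 0; lia.
    - destruct IHm as [k Hk]. destruct (Hinf (k+1)) as [_ [[k' [Hk' Hx]] _]].
      exists k'. pose proof (Y_strict k k' ltac:(lia) Hx). lia. }
  intros A. destruct (H (Z.to_nat (A - Y 0))) as [k Hk]. exists k. lia.
Qed.

Lemma col_exists A : exists j, x j = lx /\ X j = A.
Proof.
  destruct (X_below A) as [k Hk]. destruct (X_above A) as [l Hl].
  assert (G : forall n : nat, forall k, X k < A -> A <= X (k + Z.of_nat n) -> exists j, x j = lx /\ X j = A).
  { induction n; intros k' H1 H2. - replace (k' + Z.of_nat 0) with k' in H2 by lia; lia.
    - destruct (Z_le_gt_dec A (X (k'+1))) as [H3|H3].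
      + exists (k'+1). pose proof (X_step (k'+1)). replace (k'+1-1) with k' in H by lia.
        destruct (x (k'+1)); simpl in H; split; try reflexivity; try lia.
      + apply (IHn (k'+1)). lia. replace (k' + 1 + Z.of_nat n) with (k' + Z.of_nat (S n)) by lia. exact H2. }
  destruct (Z_le_gt_dec l k) as [H|H]. { pose proof (X_mono l k H). lia. }
  apply (G (Z.to_nat (l - k)) k Hk). replace (k + Z.of_nat (Z.to_nat (l - k))) with l by lia. exact Hl.
Qed.
Lemma row_exists B : exists i, x i = ly /\ Y i = B.
Proof.
  destruct (Y_below B) as [k Hk]. destruct (Y_above B) as [l Hl].
  assert (G : forall n : nat, forall k, Y k < B -> B <= Y (k + Z.of_nat n) -> exists j, x j = ly /\ Y j = B).
  { induction n; intros k' H1 H2. - replace (k' + Z.of_nat 0) with k' in H2 by lia; lia.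
    - destruct (Z_le_gt_dec B (Y (k'+1))) as [H3|H3].
      + exists (k'+1). pose proof (Y_step (k'+1)). replace (k'+1-1) with k' in H by lia.
        destruct (x (k'+1)); simpl in H; split; try reflexivity; try lia.
      + apply (IHn (k'+1)). lia. replace (k' + 1 + Z.of_nat n) with (k' + Z.of_nat (S n)) by lia. exact H2. }
  destruct (Z_le_gt_dec l k) as [H|H]. { pose proof (Y_mono l k H). lia. }
  apply (G (Z.to_nat (l - k)) k Hk). replace (k + Z.of_nat (Z.to_nat (l - k))) with l by lia. exact Hl.
Qed.

Definition colidx A : Z := proj1_sig (constructive_indefinite_description _ (col_exists A)).
Definition rowidx B : Z := proj1_sig (constructive_indefinite_description _ (row_exists B)).
Lemma colidx_spec A : x (colidx A) = lx /\ X (colidx A) = A.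
Proof. unfold colidx. destruct (constructive_indefinite_description _ _). exact a. Qed.
Lemma rowidx_spec B : x (rowidx B) = ly /\ Y (rowidx B) = B.
Proof. unfold rowidx. destruct (constructive_indefinite_description _ _). exact a. Qed.
Lemma col_unique j j' : x j = lx -> x j' = lx -> X j = X j' -> j = j'.
Proof. intros H1 H2 H3. destruct (Z_lt_ge_dec j j') as [H|H].
  - pose proof (X_strict j j' H H2); lia.
  - destruct (Z.eq_dec j j'); auto. pose proof (X_strict j' j ltac:(lia) H1); lia. Qed.
Lemma row_unique j j' : x j = ly -> x j' = ly -> Y j = Y j' -> j = j'.
Proof. intros H1 H2 H3. destruct (Z_lt_ge_dec j j') as [H|H].
  - pose proof (Y_strict j j' H H2); lia.
  - destruct (Z.eq_dec j j'); auto. pose proof (Y_strict j' j ltac:(lia) H1); lia. Qed.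
Lemma colidx_X j : x j = lx -> colidx (X j) = j.
Proof. intros H. destruct (colidx_spec (X j)). apply col_unique; auto. Qed.
Lemma rowidx_Y j : x j = ly -> rowidx (Y j) = j.
Proof. intros H. destruct (rowidx_spec (Y j)). apply row_unique; auto. Qed.
Lemma colidx_mono A A' : A <= A' -> colidx A <= colidx A'.
Proof. intros H. destruct (colidx_spec A), (colidx_spec A').
  destruct (Z_le_gt_dec (colidx A) (colidx A')); auto.
  pose proof (X_strict (colidx A') (colidx A) ltac:(lia) H0). lia. Qed.
Lemma colidx_strict A A' : A < A' -> colidx A < colidx A'.
Proof. intros H. destruct (colidx_spec A), (colidx_spec A').
  destruct (Z_lt_ge_dec (colidx A) (colidx A')); auto.
  pose proof (X_mono (colidx A') (colidx A) ltac:(lia)). lia. Qed.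
Lemma rowidx_mono A A' : A <= A' -> rowidx A <= rowidx A'.
Proof. intros H. destruct (rowidx_spec A), (rowidx_spec A').
  destruct (Z_le_gt_dec (rowidx A) (rowidx A')); auto.
  pose proof (Y_strict (rowidx A') (rowidx A) ltac:(lia) H0). lia. Qed.
Lemma rowidx_strict A A' : A < A' -> rowidx A < rowidx A'.
Proof. intros H. destruct (rowidx_spec A), (rowidx_spec A').
  destruct (Z_lt_ge_dec (rowidx A) (rowidx A')); auto.
  pose proof (Y_mono (rowidx A') (rowidx A) ltac:(lia)). lia. Qed.

Lemma first_ly i m0 : i < m0 -> x m0 = ly ->
  exists i', i < i' <= m0 /\ x i' = ly /\ forall m, i < m < i' -> x m = lx.
Proof.
  intros H0 H1.
  assert (G : forall n : nat, forall m, i < m -> x m = ly -> (Z.to_nat (m - i) <= n)%nat ->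
     exists i', i < i' <= m /\ x i' = ly /\ forall m', i < m' < i' -> x m' = lx).
  { induction n; intros m Hm Hxm Hn. - lia.
    - destruct (classic (exists m', i < m' < m /\ x m' = ly)) as [[m' [Hm' Hx']]|Hno].
      + destruct (IHn m' ltac:(lia) Hx' ltac:(lia)) as [i' Hi']. exists i'. intuition lia.
      + exists m. split; [lia|split; [exact Hxm|]]. intros m' Hm'.
        destruct (x m') eqn:E; auto. exfalso; apply Hno; exists m'; auto. }
  apply (G (Z.to_nat (m0 - i)) m0 H0 H1). lia.
Qed.
Lemma last_lx j : exists j', j' < j /\ x j' = lx /\ forall m, j' < m < j -> x m = ly.
Proof.
  destruct (Hinf (j-1)) as [_ [_ [[m0 [Hm0 Hx0]] _]]].
  assert (G : forall n : nat, forall m, m < j -> x m = lx -> (Z.to_nat (j - m) <= n)%nat ->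
     exists j', m <= j' < j /\ x j' = lx /\ forall m', j' < m' < j -> x m' = ly).
  { induction n; intros m Hm Hxm Hn. - lia.
    - destruct (classic (exists m', m < m' < j /\ x m' = lx)) as [[m' [Hm' Hx']]|Hno].
      + destruct (IHn m' ltac:(lia) Hx' ltac:(lia)) as [j' Hj']. exists j'. intuition lia.
      + exists m. split; [lia|split; [exact Hxm|]]. intros m' Hm'.
        destruct (x m') eqn:E; auto. exfalso; apply Hno; exists m'; auto. }
  destruct (G (Z.to_nat (j - m0)) m0 ltac:(lia) Hx0 ltac:(lia)) as [j' Hj']. exists j'; intuition.
Qed.

Fixpoint W (l : Z) (n : nat) : M2 := match n with O => mid | S n => mmul (mu (x l)) (W (l+1) n) end.
Lemma W_app n : forall l m, W l (n + m) = mmul (W l n) (W (l + Z.of_nat n) m).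
Proof.
  induction n; intros l m; simpl.
  - rewrite mmul_idl. f_equal; lia.
  - rewrite IHn, mmul_assoc. do 2 f_equal. lia.
Qed.
Lemma W_app' l n m l' : l' = l + Z.of_nat n -> W l (n + m) = mmul (W l n) (W l' m).
Proof. intros ->; apply W_app. Qed.
Lemma W_unimod n : forall l, unimod (W l n).
Proof. induction n; intros l; simpl. apply unimod_id. apply unimod_mul; auto using unimod_mu. Qed.
Lemma W1 l : W l 1 = mu (x l).
Proof. simpl. apply mmul_idr. Qed.
Lemma W_allx n : forall l, (forall k, l <= k < l + Z.of_nat n -> x k = lx) -> W l n = mk2 1 n 0 1.
Proof.
  induction n; intros l H; simpl. reflexivity.
  rewrite IHn by (intros k Hk; apply H; lia). rewrite H by lia.
  unfold mmul; simpl; f_equal; lia.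
Qed.
Lemma W_ally n : forall l, (forall k, l <= k < l + Z.of_nat n -> x k = ly) -> W l n = mk2 1 0 n 1.
Proof.
  induction n; intros l H; simpl. reflexivity.
  rewrite IHn by (intros k Hk; apply H; lia). rewrite H by lia.
  unfold mmul; simpl; f_equal; lia.
Qed.
Lemma out_pos A : unimod A -> (1 <= out A)%nat.
Proof. destruct A as [p q r s]; unfold unimod, out; simpl; intros H. destruct s; nia. Qed.

Definition F i j := out (W (i+1) (Z.to_nat (j - i - 1))).
Lemma F_pos i j : (1 <= F i j)%nat.
Proof. apply out_pos, W_unimod. Qed.

Variable t : Z * Z -> nat.
Hypothesis Hsl2 : forall a b : Z, Nat.mul (t (a, b+1)) (t (a+1, b)) = S (Nat.mul (t (a,b)) (t (a+1, b+1))).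
Hypothesis Hext : forall k, t (P k) = 1%nat.

Lemma t_path k : t (X k, Y k) = 1%nat.
Proof. rewrite <- P_XY. apply Hext. Qed.

Theorem T_formula : forall i j, x i = ly -> x j = lx -> i < j -> t (X j, Y i) = F i j.
Proof.
  assert (G : forall n : nat, forall i j, x i = ly -> x j = lx -> i < j -> (Z.to_nat (j - i) <= n)%nat ->
     t (X j, Y i) = F i j).
  2:{ intros i j H1 H2 H3; apply (G (Z.to_nat (j - i))); auto. }
  induction n; intros i j Hi Hj Hij Hn. lia.
  destruct (classic (exists m, i < m < j /\ x m = ly)) as [[m0 [Hm0 Hxm0]] | Hno].
  2:{ assert (Hall : forall m, i < m < j -> x m = lx).
      { intros m Hm. destruct (x m) eqn:E; auto. exfalso; apply Hno; eauto. }
      rewrite (Y_const i j) by (lia || (intros m Hm; destruct (Z.eq_dec m j); [subst; auto| apply Hall; lia])).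
      rewrite t_path. unfold F. rewrite W_allx. reflexivity. intros k Hk; apply Hall; lia. }
  destruct (first_ly i m0 ltac:(lia) Hxm0) as [i' [Hi'1 [Hi'2 Hi'3]]].
  destruct (last_lx j) as [jm [Hjm1 [Hjm2 Hjm3]]].
  assert (EY : Y i' = Y i + 1).
  { rewrite (Y_step i'), Hi'2. simpl. rewrite <- (Y_const i (i'-1)); try lia. intros m Hm; apply Hi'3; lia. }
  assert (EX : X jm + 1 = X j).
  { rewrite (X_step j), Hj. simpl. rewrite <- (X_const jm (j-1)); try lia. intros m Hm; apply Hjm3; lia. }
  pose proof (Hsl2 (X jm) (Y i)) as E. rewrite <- EY, EX in E.
  assert (IH1 : t (X j, Y i') = F i' j) by (apply IHn; auto; lia).
  rewrite IH1 in E.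
  destruct (Z_lt_ge_dec i' jm) as [C|C].
  -
    rewrite (IHn i' jm) in E by (auto; lia). rewrite (IHn i jm) in E by (auto; lia).
    set (al := Z.to_nat (i' - i - 1)). set (ga := Z.to_nat (jm - i' - 1)). set (be := Z.to_nat (j - jm - 1)).
    set (M := W (i'+1) ga).
    assert (HX : W (i+1) al = mk2 1 al 0 1).
    { apply W_allx. intros k Hk. apply Hi'3. unfold al in Hk. lia. }
    assert (HY : W (jm+1) be = mk2 1 0 be 1).
    { apply W_ally. intros k Hk. apply Hjm3. unfold be in Hk. lia. }
    assert (F1 : F i j = out (mmul (mk2 1 al 0 1) (mmul (mu ly) (mmul M (mmul (mu lx) (mk2 1 0 be 1)))))).
    { unfold F. replace (Z.to_nat (j - i - 1)) with (al + (1 + (ga + (1 + be))))%nat by (unfold al, ga, be; lia).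
      rewrite (W_app' (i+1) al _ i') by (unfold al; lia).
      rewrite (W_app' i' 1 _ (i'+1)) by lia.
      rewrite (W_app' (i'+1) ga _ jm) by (unfold ga; lia).
      rewrite (W_app' jm 1 _ (jm+1)) by lia.
      rewrite HX, HY, !W1, Hi'2, Hjm2. reflexivity. }
    assert (F2 : F i jm = out (mmul (mk2 1 al 0 1) (mmul (mu ly) M))).
    { unfold F. replace (Z.to_nat (jm - i - 1)) with (al + (1 + ga))%nat by (unfold al, ga; lia).
      rewrite (W_app' (i+1) al _ i') by (unfold al; lia).
      rewrite (W_app' i' 1 _ (i'+1)) by lia.
      rewrite HX, W1, Hi'2. reflexivity. }
    assert (F3 : F i' j = out (mmul M (mmul (mu lx) (mk2 1 0 be 1)))).
    { unfold F. replace (Z.to_nat (j - i' - 1)) with (ga + (1 + be))%nat by (unfold ga, be; lia).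
      rewrite (W_app' (i'+1) ga _ jm) by (unfold ga; lia).
      rewrite (W_app' jm 1 _ (jm+1)) by lia.
      rewrite HY, W1, Hjm2. reflexivity. }
    assert (F4 : F i' jm = out M) by reflexivity.
    pose proof (key_alg M al be (W_unimod _ _)) as K.
    rewrite <- F1, <- F2, <- F3, <- F4 in K.
    pose proof (F_pos i' jm).
    apply (Nat.mul_cancel_l _ _ (F i' jm)). lia. rewrite E, K. lia.
  -
    assert (C' : jm < i') by (destruct (Z.eq_dec i' jm); [subst; congruence | lia]).
    assert (T1 : t (X jm, Y i') = 1%nat).
    { rewrite (X_const jm i') by (try lia; intros m Hm; apply Hjm3; lia). apply t_path. }
    assert (T2 : t (X jm, Y i) = 1%nat).
    { destruct (Z_lt_ge_dec i jm) as [D|D].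
      - rewrite IHn by (auto; lia). unfold F. rewrite W_allx. reflexivity.
        intros k Hk. apply Hi'3. lia.
      - assert (i <> jm) by (intro; subst; congruence).
        rewrite (X_const jm i) by (try lia; intros m Hm; apply Hjm3; lia). apply t_path. }
    rewrite T1, T2 in E.
    assert (FF : F i j = (1 + F i' j)%nat).
    { unfold F. replace (Z.to_nat (j - i - 1)) with (Z.to_nat (i' - i - 1) + Z.to_nat (j - i'))%nat by lia.
      rewrite (W_app' (i+1) _ _ i') by lia.
      rewrite W_allx by (intros k Hk; apply Hi'3; lia).
      rewrite (W_ally (Z.to_nat (j - i'))) by (intros k Hk; apply Hjm3; lia).
      rewrite W_ally by (intros k Hk; apply Hjm3; lia).
      unfold mmul, out; simpl. lia. }
    lia.
Qed.
Variables p n0 n0' : Z.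
Hypothesis Hp : 1 <= p.
Hypothesis Hfwd : forall n, n0 <= n -> x n = x (n + p).
Hypothesis Hbwd : forall n, n <= n0' -> x n = x (n - p).

Lemma x_fwd_iter n (k : nat) : n0 <= n -> x (n + Z.of_nat k * p) = x n.
Proof.
  intros H. induction k. - f_equal; lia.
  - replace (n + Z.of_nat (S k) * p) with (n + Z.of_nat k * p + p) by lia.
    rewrite <- Hfwd by nia. exact IHk.
Qed.
Lemma x_bwd_iter n (k : nat) : n <= n0' -> x (n - Z.of_nat k * p) = x n.
Proof.
  intros H. induction k. - f_equal; lia.
  - replace (n - Z.of_nat (S k) * p) with (n - Z.of_nat k * p - p) by lia.
    rewrite <- Hbwd by nia. exact IHk.
Qed.
Lemma W_shift_fwd m : forall l, n0 <= l -> W (l + p) m = W l m.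
Proof.
  induction m; intros l H; simpl. reflexivity.
  rewrite <- Hfwd by lia. replace (l + p + 1) with (l + 1 + p) by lia. rewrite IHm by lia. reflexivity.
Qed.
Lemma W_shift_bwd m : forall l, l + Z.of_nat m - 1 <= n0' -> W (l - p) m = W l m.
Proof.
  induction m; intros l H; simpl. reflexivity.
  rewrite <- Hbwd by lia. replace (l - p + 1) with (l + 1 - p) by lia. rewrite IHm by lia. reflexivity.
Qed.
Definition cx := X (n0 + p) - X n0.
Definition cy := Y n0' - Y (n0' - p).
Lemma X_per_nat (k : nat) : X (n0 + Z.of_nat k + p) = X (n0 + Z.of_nat k) + cx.
Proof.
  unfold cx. induction k. - replace (n0 + Z.of_nat 0) with n0 by lia. lia.
  - rewrite (X_step (n0 + Z.of_nat (S k) + p)), (X_step (n0 + Z.of_nat (S k))).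
    replace (n0 + Z.of_nat (S k) + p - 1) with (n0 + Z.of_nat k + p) by lia.
    replace (n0 + Z.of_nat (S k) - 1) with (n0 + Z.of_nat k) by lia.
    rewrite <- (Hfwd (n0 + Z.of_nat (S k))) by lia. lia.
Qed.
Lemma X_per j : n0 <= j -> X (j + p) = X j + cx.
Proof. intros H. replace j with (n0 + Z.of_nat (Z.to_nat (j - n0))) by lia. apply X_per_nat. Qed.
Lemma Y_per_nat (k : nat) : Y (n0' - Z.of_nat k - p) = Y (n0' - Z.of_nat k) - cy.
Proof.
  unfold cy. induction k. - replace (n0' - Z.of_nat 0) with n0' by lia. lia.
  - pose proof (Y_step (n0' - Z.of_nat k - p)). pose proof (Y_step (n0' - Z.of_nat k)).
    replace (n0' - Z.of_nat k - p - 1) with (n0' - Z.of_nat (S k) - p) in H by lia.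
    replace (n0' - Z.of_nat k - 1) with (n0' - Z.of_nat (S k)) in H0 by lia.
    rewrite <- (Hbwd (n0' - Z.of_nat k)) in H by lia. lia.
Qed.
Lemma Y_per i : i <= n0' -> Y (i - p) = Y i - cy.
Proof. intros H. replace i with (n0' - Z.of_nat (Z.to_nat (n0' - i))) by lia. apply Y_per_nat. Qed.

Variables a b q1 q2 : Z.
Hypothesis Ha : 0 <= a.
Hypothesis Hb : 0 <= b.
Hypothesis Hab : 0 < a + b.

Definition nextc j := colidx (X j + a).
Definition prevr i := rowidx (Y i - b).
Definition Lm i := if Z.eqb b 0 then mid else W (prevr i + 1) (Z.to_nat (i - prevr i)).
Definition Rm j := if Z.eqb a 0 then mid else W j (Z.to_nat (nextc j - j)).
Definition jn (n : nat) := colidx (q1 + Z.of_nat n * a).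
Definition in_ (n : nat) := rowidx (q2 - Z.of_nat n * b).
Definition Vn n := W (in_ n + 1) (Z.to_nat (jn n - in_ n - 1)).

Lemma nextc_ge j : x j = lx -> j <= nextc j.
Proof. intros H. unfold nextc. rewrite <- (colidx_X j H) at 1. apply colidx_mono. lia. Qed.
Lemma prevr_le i : x i = ly -> prevr i <= i.
Proof. intros H. unfold prevr. rewrite <- (rowidx_Y i H) at 2. apply rowidx_mono. lia. Qed.
Lemma Lm_eq i : x i = ly -> Lm i = W (prevr i + 1) (Z.to_nat (i - prevr i)).
Proof.
  intros H. unfold Lm. destruct (Z.eqb_spec b 0). 2: reflexivity.
  unfold prevr. rewrite e, Z.sub_0_r, rowidx_Y by exact H. replace (i - i) with 0 by lia. reflexivity.
Qed.
Lemma Rm_eq j : x j = lx -> Rm j = W j (Z.to_nat (nextc j - j)).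
Proof.
  intros H. unfold Rm. destruct (Z.eqb_spec a 0). 2: reflexivity.
  unfold nextc. rewrite e, Z.add_0_r, colidx_X by exact H. replace (j - j) with 0 by lia. reflexivity.
Qed.

Lemma jn_spec n : x (jn n) = lx /\ X (jn n) = q1 + Z.of_nat n * a.
Proof. apply colidx_spec. Qed.
Lemma in_spec n : x (in_ n) = ly /\ Y (in_ n) = q2 - Z.of_nat n * b.
Proof. apply rowidx_spec. Qed.
Lemma jn_S n : jn (S n) = nextc (jn n).
Proof. unfold nextc. rewrite (proj2 (jn_spec n)). unfold jn. f_equal. lia. Qed.
Lemma in_S n : in_ (S n) = prevr (in_ n).
Proof. unfold prevr. rewrite (proj2 (in_spec n)). unfold in_. f_equal. lia. Qed.

Lemma ray_val n : in_ n < jn n -> t (q1 + Z.of_nat n * a, q2 - Z.of_nat n * b) = out (Vn n).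
Proof.
  intros H. destruct (jn_spec n) as [J1 J2], (in_spec n) as [I1 I2].
  rewrite <- J2, <- I2. rewrite T_formula by auto. reflexivity.
Qed.

Lemma Vn_step n : in_ n < jn n -> Vn (S n) = mmul (Lm (in_ n)) (mmul (Vn n) (Rm (jn n))).
Proof.
  intros H. destruct (jn_spec n) as [J1 J2], (in_spec n) as [I1 I2].
  rewrite Lm_eq, Rm_eq by auto. unfold Vn. rewrite jn_S, in_S.
  pose proof (prevr_le _ I1). pose proof (nextc_ge _ J1).
  set (i := in_ n) in *. set (j := jn n) in *.
  replace (Z.to_nat (nextc j - prevr i - 1)) with
    (Z.to_nat (i - prevr i) + (Z.to_nat (j - i - 1) + Z.to_nat (nextc j - j)))%nat by lia.
  rewrite (W_app' (prevr i + 1) _ _ (i+1)) by lia.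
  rewrite (W_app' (i + 1) _ _ j) by lia. reflexivity.
Qed.
Lemma nextc_shift j : x j = lx -> n0 <= j -> nextc (j + p) = nextc j + p.
Proof.
  intros H1 H2. pose proof (nextc_ge j H1). destruct (colidx_spec (X j + a)) as [C1 C2].
  fold (nextc j) in C1, C2.
  unfold nextc at 1. rewrite X_per by lia.
  replace (X j + cx + a) with (X (nextc j + p)) by (rewrite X_per by lia; lia).
  apply colidx_X. rewrite <- Hfwd by lia. exact C1.
Qed.
Lemma prevr_shift i : x i = ly -> i <= n0' -> prevr (i - p) = prevr i - p.
Proof.
  intros H1 H2. pose proof (prevr_le i H1). destruct (rowidx_spec (Y i - b)) as [C1 C2].
  fold (prevr i) in C1, C2.
  unfold prevr at 1. rewrite Y_per by lia.
  replace (Y i - cy - b) with (Y (prevr i - p)) by (rewrite Y_per by lia; lia).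
  apply rowidx_Y. rewrite <- Hbwd by lia. exact C1.
Qed.
Lemma Rm_shift j : x j = lx -> n0 <= j -> Rm (j + p) = Rm j.
Proof.
  intros H1 H2. unfold Rm. destruct (Z.eqb a 0). reflexivity.
  rewrite nextc_shift by auto. replace (nextc j + p - (j + p)) with (nextc j - j) by lia.
  apply W_shift_fwd; lia.
Qed.
Lemma Lm_shift i : x i = ly -> i <= n0' -> Lm (i - p) = Lm i.
Proof.
  intros H1 H2. pose proof (prevr_le i H1). unfold Lm. destruct (Z.eqb b 0). reflexivity.
  rewrite prevr_shift by auto. replace (i - p - (prevr i - p)) with (i - prevr i) by lia.
  replace (prevr i - p + 1) with (prevr i + 1 - p) by lia.
  apply W_shift_bwd; lia.
Qed.
Lemma fwd_iter j (k : nat) : x j = lx -> n0 <= j ->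
  x (j + Z.of_nat k * p) = lx /\ nextc (j + Z.of_nat k * p) = nextc j + Z.of_nat k * p
  /\ Rm (j + Z.of_nat k * p) = Rm j.
Proof.
  intros H1 H2. induction k. - replace (j + Z.of_nat 0 * p) with j by lia. repeat split; auto; lia.
  - destruct IHk as [E1 [E2 E3]].
    replace (j + Z.of_nat (S k) * p) with (j + Z.of_nat k * p + p) by lia.
    assert (n0 <= j + Z.of_nat k * p) by nia.
    split. rewrite <- Hfwd by auto. exact E1.
    split. rewrite nextc_shift by auto. lia.
    rewrite Rm_shift by auto. exact E3.
Qed.
Lemma bwd_iter i (k : nat) : x i = ly -> i <= n0' ->
  x (i - Z.of_nat k * p) = ly /\ prevr (i - Z.of_nat k * p) = prevr i - Z.of_nat k * p
  /\ Lm (i - Z.of_nat k * p) = Lm i.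
Proof.
  intros H1 H2. induction k. - replace (i - Z.of_nat 0 * p) with i by lia. repeat split; auto; lia.
  - destruct IHk as [E1 [E2 E3]].
    replace (i - Z.of_nat (S k) * p) with (i - Z.of_nat k * p - p) by lia.
    assert (i - Z.of_nat k * p <= n0') by nia.
    split. rewrite <- Hbwd by auto. exact E1.
    split. rewrite prevr_shift by auto. lia.
    rewrite Lm_shift by auto. exact E3.
Qed.

Definition rj j := (j - n0) mod p.
Definition repj r := n0 + r.
Definition ri i := (n0' - i) mod p.
Definition repi r := n0' - r.

Lemma rj_dec j : n0 <= j -> exists k : nat, j = repj (rj j) + Z.of_nat k * p.
Proof.
  intros H. exists (Z.to_nat ((j - n0) / p)). unfold repj, rj.
  pose proof (Z.div_mod (j - n0) p ltac:(lia)). pose proof (Z.div_pos (j - n0) p ltac:(lia) ltac:(lia)).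
  rewrite Z2Nat.id by lia. lia.
Qed.
Lemma ri_dec i : i <= n0' -> exists k : nat, i = repi (ri i) - Z.of_nat k * p.
Proof.
  intros H. exists (Z.to_nat ((n0' - i) / p)). unfold repi, ri.
  pose proof (Z.div_mod (n0' - i) p ltac:(lia)). pose proof (Z.div_pos (n0' - i) p ltac:(lia) ltac:(lia)).
  rewrite Z2Nat.id by lia. lia.
Qed.
Lemma rj_bound j : 0 <= rj j < p. Proof. apply Z.mod_pos_bound; lia. Qed.
Lemma ri_bound i : 0 <= ri i < p. Proof. apply Z.mod_pos_bound; lia. Qed.

Lemma B_ok j : x j = lx -> n0 <= j ->
  Rm (repj (rj j)) = Rm j /\ rj (nextc (repj (rj j))) = rj (nextc j).
Proof.
  intros H1 H2. destruct (rj_dec j H2) as [k Hk].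
  pose proof (rj_bound j). assert (n0 <= repj (rj j)) by (unfold repj; lia).
  assert (Hx : x (repj (rj j)) = lx).
  { rewrite <- H1. rewrite Hk at 2. symmetry. apply x_fwd_iter. auto. }
  destruct (fwd_iter (repj (rj j)) k Hx H0) as [_ [E2 E3]]. rewrite <- Hk in E2, E3.
  split. auto. rewrite E2. unfold rj.
  set (u := nextc (repj ((j - n0) mod p))).
  replace (u + Z.of_nat k * p - n0) with (u - n0 + Z.of_nat k * p) by lia.
  rewrite Z.mod_add by lia. reflexivity.
Qed.
Lemma A_ok i : x i = ly -> i <= n0' ->
  Lm (repi (ri i)) = Lm i /\ ri (prevr (repi (ri i))) = ri (prevr i).
Proof.
  intros H1 H2. destruct (ri_dec i H2) as [k Hk].
  pose proof (ri_bound i). assert (repi (ri i) <= n0') by (unfold repi; lia).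
  assert (Hx : x (repi (ri i)) = ly).
  { rewrite <- H1. rewrite Hk at 2. symmetry. apply x_bwd_iter. auto. }
  destruct (bwd_iter (repi (ri i)) k Hx H0) as [_ [E2 E3]]. rewrite <- Hk in E2, E3.
  split. auto. rewrite E2. set (u := prevr (repi (ri i))). unfold ri.
  replace (n0' - (u - Z.of_nat k * p)) with (n0' - u + Z.of_nat k * p) by lia.
  rewrite Z.mod_add by lia. reflexivity.
Qed.

Definition sig (s : Z * Z) : Z * Z :=
  (if Z.eqb b 0 then fst s else ri (prevr (repi (fst s))),
   if Z.eqb a 0 then snd s else rj (nextc (repj (snd s)))).
Definition Am (s : Z * Z) := Lm (repi (fst s)).
Definition Bm (s : Z * Z) := Rm (repj (snd s)).

Lemma jn_grow n : 0 < a -> jn 0 + Z.of_nat n <= jn n.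
Proof.
  intros H. induction n. simpl; lia.
  assert (jn n < jn (S n)) by (apply colidx_strict; lia). lia.
Qed.
Lemma in_grow n : 0 < b -> in_ n <= in_ 0 - Z.of_nat n.
Proof.
  intros H. induction n. simpl; lia.
  assert (in_ (S n) < in_ n) by (apply rowidx_strict; lia). lia.
Qed.
Lemma jn_mono n : jn 0 <= jn n.
Proof. apply colidx_mono. lia. Qed.
Lemma in_mono n : in_ n <= in_ 0.
Proof. apply rowidx_mono. lia. Qed.

Definition Nst := Z.to_nat (Z.abs (in_ 0 - jn 0) + Z.abs (n0 - jn 0) + Z.abs (in_ 0 - n0') + 1).
Lemma good m : (Nst <= m)%nat ->
  in_ m < jn m /\ (b = 0 \/ in_ m <= n0') /\ (a = 0 \/ n0 <= jn m).
Proof.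
  intros H. unfold Nst in H. pose proof (jn_mono m). pose proof (in_mono m).
  destruct (Z.eq_dec a 0) as [Ea|Ea]; destruct (Z.eq_dec b 0) as [Eb|Eb].
  - lia.
  - pose proof (in_grow m ltac:(lia)). lia.
  - pose proof (jn_grow m ltac:(lia)). lia.
  - pose proof (in_grow m ltac:(lia)). pose proof (jn_grow m ltac:(lia)). lia.
Qed.


Definition s0 := (ri (in_ Nst), rj (jn Nst)).
Lemma run_ok n : snd (grun sig Am Bm s0 (Vn Nst) n) = Vn (Nst + n) /\
  (b = 0 \/ fst (fst (grun sig Am Bm s0 (Vn Nst) n)) = ri (in_ (Nst + n))) /\
  (a = 0 \/ snd (fst (grun sig Am Bm s0 (Vn Nst) n)) = rj (jn (Nst + n))).
Proof.
  induction n. - simpl. rewrite Nat.add_0_r. auto.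
  - destruct IHn as [E1 [E2 E3]]. destruct (good (Nst + n) ltac:(lia)) as [G1 [G2 G3]].
    destruct (jn_spec (Nst + n)) as [J1 _], (in_spec (Nst + n)) as [I1 _].
    replace (Nst + S n)%nat with (S (Nst + n)) by lia.
    simpl. destruct (grun sig Am Bm s0 (Vn Nst) n) as [s V]. simpl in *.
    assert (HA : Am s = Lm (in_ (Nst + n))).
    { unfold Am, Lm. destruct (Z.eqb_spec b 0). reflexivity.
      destruct E2 as [E2|E2]; [lia|]. destruct G2 as [G2|G2]; [lia|].
      rewrite E2. pose proof (A_ok _ I1 G2) as [K _]. unfold Lm in K. rewrite (proj2 (Z.eqb_neq b 0) n1) in K. exact K. }
    assert (HB : Bm s = Rm (jn (Nst + n))).
    { unfold Bm, Rm. destruct (Z.eqb_spec a 0). reflexivity.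
      destruct E3 as [E3|E3]; [lia|]. destruct G3 as [G3|G3]; [lia|].
      rewrite E3. pose proof (B_ok _ J1 G3) as [K _]. unfold Rm in K. rewrite (proj2 (Z.eqb_neq a 0) n1) in K. exact K. }
    split. rewrite HA, HB, E1, Vn_step by auto. reflexivity.
    split.
    + destruct (Z.eqb_spec b 0). left; auto. right.
      destruct E2 as [E2|E2]; [lia|]. destruct G2 as [G2|G2]; [lia|].
      rewrite E2, in_S. apply (A_ok _ I1 G2).
    + destruct (Z.eqb_spec a 0). left; auto. right.
      destruct E3 as [E3|E3]; [lia|]. destruct G3 as [G3|G3]; [lia|].
      rewrite E3, jn_S. apply (B_ok _ J1 G3).
Qed.

Lemma ray_SE_main : forall n, t (q1 + Z.of_nat (Nst + n) * a, q2 - Z.of_nat (Nst + n) * b)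
   = out (snd (grun sig Am Bm s0 (Vn Nst) n)).
Proof.
  intros n. rewrite (proj1 (run_ok n)). apply ray_val. apply good. lia.
Qed.
Lemma sig_bound s : 0 <= fst s < p -> 0 <= snd s < p -> 0 <= fst (sig s) < p /\ 0 <= snd (sig s) < p.
Proof.
  intros H1 H2. unfold sig; simpl. split.
  destruct (Z.eqb b 0); auto; apply ri_bound. destruct (Z.eqb a 0); auto; apply rj_bound.
Qed.
Lemma s0_bound : 0 <= fst s0 < p /\ 0 <= snd s0 < p.
Proof. split; [apply ri_bound | apply rj_bound]. Qed.
Lemma ray_SE : auto_seq (fun n => t (q1 + Z.of_nat n * a, q2 - Z.of_nat n * b)).
Proof.
  exists p, Nst, sig, Am, Bm, s0, (Vn Nst). split. lia. split. apply s0_bound.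
  split. intros s [H1 H2]. apply sig_bound; auto. apply ray_SE_main.
Qed.
End ZW.

Theorem ray_Z (x : Z -> letter) (P : Z -> Z * Z) (t : Z * Z -> nat)
  (Hemb : forall k, P k = (fst (P (k-1)) + dxl (x k), snd (P (k-1)) + dyl (x k)))
  (Hinf : forall N, (exists k, N <= k /\ x k = lx) /\ (exists k, N <= k /\ x k = ly)
     /\ (exists k, k <= N /\ x k = lx) /\ (exists k, k <= N /\ x k = ly))
  (Hsl2 : forall a b : Z, Nat.mul (t (a, b+1)) (t (a+1, b)) = S (Nat.mul (t (a,b)) (t (a+1, b+1))))
  (Hext : forall k, t (P k) = 1%nat)
  (p n0 n0' : Z) (Hp : 1 <= p) (Hfwd : forall n, n0 <= n -> x n = x (n + p))
  (Hbwd : forall n, n <= n0' -> x n = x (n - p))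
  (q1 q2 v1 v2 : Z) (Hv : v1 <> 0 \/ v2 <> 0) (Hvv : v1 * v2 <= 0) :
  auto_seq (fun n => t (q1 + Z.of_nat n * v1, q2 + Z.of_nat n * v2)).
Proof.
  destruct (classic (0 <= v1 /\ v2 <= 0)) as [[C1 C2]|C].
  - pose proof (ray_SE x P Hemb Hinf t Hsl2 Hext p n0 n0' Hp Hfwd Hbwd v1 (- v2) q1 q2 C1 ltac:(lia) ltac:(lia)) as H.
    replace (fun n : nat => t (q1 + Z.of_nat n * v1, q2 + Z.of_nat n * v2))
      with (fun n : nat => t (q1 + Z.of_nat n * v1, q2 - Z.of_nat n * - v2)); auto.
    apply functional_extensionality; intros n. f_equal. f_equal. lia.
  - assert (v1 <= 0 /\ 0 <= v2) by nia.
    set (x' := fun k => x (1 - k)).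
    set (P' := fun k => (- fst (P (- k)), - snd (P (- k)))).
    set (t' := fun q : Z * Z => t (- fst q, - snd q)).
    assert (Hemb' : forall k, P' k = (fst (P' (k-1)) + dxl (x' k), snd (P' (k-1)) + dyl (x' k))).
    { intros k. unfold P', x'; simpl. replace (- (k - 1)) with (1 - k) by lia.
      rewrite (Hemb (1 - k)). replace (1 - k - 1) with (- k) by lia. simpl. f_equal; lia. }
    assert (Hinf' : forall N, (exists k, N <= k /\ x' k = lx) /\ (exists k, N <= k /\ x' k = ly)
     /\ (exists k, k <= N /\ x' k = lx) /\ (exists k, k <= N /\ x' k = ly)).
    { intros N. destruct (Hinf (1 - N)) as [[k1 [A1 B1]] [[k2 [A2 B2]] [[k3 [A3 B3]] [k4 [A4 B4]]]]].
      unfold x'. repeat split.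
      exists (1 - k3); split; [lia|]; rewrite <- B3; f_equal; lia.
      exists (1 - k4); split; [lia|]; rewrite <- B4; f_equal; lia.
      exists (1 - k1); split; [lia|]; rewrite <- B1; f_equal; lia.
      exists (1 - k2); split; [lia|]; rewrite <- B2; f_equal; lia. }
    assert (Hsl2' : forall a b : Z, Nat.mul (t' (a, b+1)) (t' (a+1, b)) = S (Nat.mul (t' (a,b)) (t' (a+1, b+1)))).
    { intros a b. unfold t'; simpl. pose proof (Hsl2 (- a - 1) (- b - 1)) as E.
      replace (- b - 1 + 1) with (- b) in E by lia. replace (- a - 1 + 1) with (- a) in E by lia.
      replace (- (b + 1)) with (- b - 1) by lia. replace (- (a + 1)) with (- a - 1) by lia.
      rewrite Nat.mul_comm, E. f_equal. apply Nat.mul_comm. }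
    assert (Hext' : forall k, t' (P' k) = 1%nat).
    { intros k. unfold t', P'; simpl. rewrite !Z.opp_involutive. destruct (P (- k)) eqn:E. simpl.
      rewrite <- E. apply Hext. }
    assert (Hfwd' : forall n, 1 - n0' <= n -> x' n = x' (n + p)).
    { intros n H'. unfold x'. rewrite (Hbwd (1 - n)) by lia. f_equal; lia. }
    assert (Hbwd' : forall n, n <= 1 - n0 -> x' n = x' (n - p)).
    { intros n H'. unfold x'. rewrite (Hfwd (1 - n)) by lia. f_equal; lia. }
    pose proof (ray_SE x' P' Hemb' Hinf' t' Hsl2' Hext' p (1 - n0') (1 - n0) Hp Hfwd' Hbwd'
       (- v1) v2 (- q1) (- q2) ltac:(lia) ltac:(lia) ltac:(lia)) as H'.
    replace (fun n : nat => t (q1 + Z.of_nat n * v1, q2 + Z.of_nat n * v2))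
      with (fun n : nat => t' (- q1 + Z.of_nat n * - v1, - q2 - Z.of_nat n * v2)); auto.
    apply functional_extensionality; intros n. unfold t'; simpl. f_equal. f_equal; lia.
Qed.
Close Scope Z_scope.
From HB Require Import structures.
From mathcomp Require Import all_boot all_order all_algebra.
Import Order.TTheory GRing.Theory Num.Theory.
Local Open Scope ring_scope.

Definition stepv {T : finType} (M : T -> T -> nat) (w : T -> nat) : T -> nat :=
  fun s => (\sum_(s' : T) M s s' * w s')%N.
Definition FR (f : nat -> nat) : Prop :=
  exists (T : finType) (lam gam : T -> nat) (M : T -> T -> nat),
    forall n, f n = (\sum_(s : T) lam s * iter n (stepv M) gam s)%N.

Lemma sum_ind (S : finType) (a : S) (G : S -> nat) : (\sum_(s : S) (s == a) * G s)%N = G a.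
Proof. rewrite (bigD1 a) //= eqxx mul1n big1 ?addn0 // => s /negbTE -> /=; by rewrite ?mul0n. Qed.
Lemma sum_unit (F : unit -> nat) : (\sum_(u : unit) F u)%N = F tt.
Proof. rewrite (bigD1 tt) //= big_pred0 ?addn0 // => -[]. Qed.

Lemma FR_N_rational f : FR f -> N_rational f.
Proof.
  move=> [T [lam [gam [M H]]]].
  exists #|T|, ((\row_i lam (enum_val i) : 'rV[nat]_#|T|)), ((\matrix_(i, j) M (enum_val i) (enum_val j) : 'M[nat]_#|T|)),
    ((\col_i gam (enum_val i) : 'cV[nat]_#|T|)).
  have E : forall n, iter n (mulmx ((\matrix_(i, j) M (enum_val i) (enum_val j) : 'M[nat]_#|T|)))
      ((\col_i gam (enum_val i) : 'cV[nat]_#|T|)) = (\col_i iter n (stepv M) gam (enum_val i) : 'cV[nat]_#|T|).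
  { elim=> [|n IH] /=. by [].
    rewrite IH. apply/matrixP => i j. rewrite !mxE /stepv.
    rewrite [RHS](reindex _ (onW_bij _ (@enum_val_bij T))) /=.
    apply: eq_bigr => k _. by rewrite !mxE. }
  move=> n. rewrite E H !mxE.
  rewrite [LHS](reindex _ (onW_bij _ (@enum_val_bij T))) /=.
  apply: eq_bigr => k _. by rewrite !mxE.
Qed.

Ltac nsimp := rewrite /= ?mul0n ?muln0 ?muln1 ?mul1n ?add0n ?addn0.

Lemma FR_ext f g : (forall n, f n = g n) -> FR g -> FR f.
Proof. move=> E [T [lam [gam [M H]]]]. exists T, lam, gam, M => n. by rewrite E H. Qed.

Lemma sum_sumunit (T : finType) (F : (T + unit)%type -> nat) :
  (\sum_(u : (T + unit)%type) F u)%N = (\sum_(s : T) F (inl s) + F (inr tt))%N.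
Proof. rewrite (big_sumType _ xpredT) /=. by rewrite sum_unit. Qed.

Lemma FR_cons c g : FR g -> FR (fun n => if n is n'.+1 then g n' else c).
Proof.
  move=> [T [lam [gam [M H]]]].
  pose lam' := fun u : (T + unit)%type => match u with inl s => lam s | inr _ => c end.
  pose gam' := fun u : (T + unit)%type => match u with inl s => 0%N | inr _ => 1%N end.
  pose M' := fun u v : (T + unit)%type => match u, v with inl s, inl s' => M s s' | inl s, inr _ => gam s | inr _, _ => 0%N end.
  exists (T + unit)%type, lam', gam', M'.
  have E : forall n, iter n.+1 (stepv M') gam' = fun u => match u with inl s => iter n (stepv M) gam s | inr _ => 0%N end.
  { elim=> [|n IH].
    - apply: functional_extensionality => -[s|[]] /=; rewrite /stepv sum_sumunit /=.
      + rewrite big1; [by nsimp| move=> *; by nsimp].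
      + rewrite big1; [by nsimp| move=> *; by nsimp].
    - rewrite iterS IH. apply: functional_extensionality => -[s|[]] /=; rewrite /stepv sum_sumunit /=.
      + by nsimp.
      + rewrite big1; [by nsimp| move=> *; by nsimp]. }
  case=> [|n].
  - rewrite /= sum_sumunit /= big1; [by nsimp| move=> *; by nsimp].
  - rewrite E sum_sumunit /=. nsimp. apply: H.
Qed.

Lemma FR_prefix N : forall f g, FR g -> (forall n, f (N + n)%N = g n) -> FR f.
Proof.
  elim: N => [|N IH] f g Hg Hf.
  - apply: (FR_ext f g _ Hg) => n. by rewrite -Hf.
  - have H1 : FR (fun n => f n.+1) by apply: (IH _ g Hg) => n /=; rewrite -Hf addSn.
    apply: (FR_ext f _ _ (FR_cons (f 0%N) _ H1)). by case.
Qed.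

Fixpoint mrun {St : finType} (sg : St -> St) (A B : St -> M2) (s0 : St) (C0 : M2) (n : nat) : St * M2 :=
  match n with O => (s0, C0) | n'.+1 => let r := mrun sg A B s0 C0 n' in
     (sg r.1, mmul (A r.1) (mmul r.2 (B r.1))) end.
Definition ent (V : M2) (k l : bool) : nat :=
  if k then (if l then a22 V else a21 V) else (if l then a12 V else a11 V).

Lemma sum3 (St : finType) (F : (St * bool * bool)%type -> nat) :
  (\sum_(u : (St * bool * bool)%type) F u)%N = (\sum_(s : St) \sum_(k : bool) \sum_(l : bool) F ((s, k), l))%N.
Proof.
  transitivity (\sum_(x : (St * bool)%type) \sum_(l : bool) F (x, l))%N.
  - rewrite pair_bigA. apply: eq_bigr => -[x l] _. done.
  - rewrite [RHS]pair_bigA. apply: eq_bigr => -[s k] _. done.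
Qed.

Lemma ent_mul3 A V B k' l' :
  (\sum_(k : bool) \sum_(l : bool) ent A k' k * ent B l l' * ent V k l)%N = ent (mmul A (mmul V B)) k' l'.
Proof.
  case: k'; case: l'; rewrite !big_bool; destruct A, V, B; rewrite /ent /mmul /=; rewrite -?plusE -?multE; ring.
Qed.

Lemma FR_machine (St : finType) sg (A B : St -> M2) s0 C0 : FR (fun n => out (mrun sg A B s0 C0 n).2).
Proof.
  pose T := (St * bool * bool)%type.
  pose gam := fun u : T => ((u.1.1 == s0) * ent C0 u.1.2 u.2)%N.
  pose M := fun u v : T => ((u.1.1 == sg v.1.1) * (ent (A v.1.1) u.1.2 v.1.2 * ent (B v.1.1) v.2 u.2))%N.
  pose lam := fun u : T => nat_of_bool u.1.2.
  exists T, lam, gam, M.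
  have E : forall n, iter n (stepv M) gam =
      fun u : T => ((u.1.1 == (mrun sg A B s0 C0 n).1) * ent (mrun sg A B s0 C0 n).2 u.1.2 u.2)%N.
  { elim=> [|n IH]; first by [].
    rewrite iterS IH. apply: functional_extensionality => -[[s' k'] l'] /=. rewrite /stepv sum3.
    set r := mrun sg A B s0 C0 n.
    rewrite (bigD1 r.1) //= [X in (_ + X)%N]big1 ?addn0.
    - rewrite /M /= eqxx. case: (s' == sg r.1) => /=.
      + rewrite mul1n -ent_mul3. apply: eq_bigr => k _. apply: eq_bigr => l _. by nsimp.
      + rewrite big1 ?mul0n // => k _; rewrite big1 // => l _; by rewrite !mul0n.
    - move=> s /negbTE Hs. rewrite big1 // => k _. rewrite big1 // => l _. by rewrite Hs /= !muln0. }
  move=> n. rewrite E sum3. set r := mrun sg A B s0 C0 n.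
  rewrite (bigD1 r.1) //= [X in (_ + X)%N]big1 ?addn0.
  - rewrite ?eqxx !big_bool /lam /=. rewrite /out /ent. nsimp. by rewrite -plusE Nat.add_comm.
  - move=> s /negbTE Hs. rewrite big1 // => k _. rewrite big1 // => l _. by rewrite Hs /= !muln0.
Qed.

Lemma FR_auto f : auto_seq f -> FR f.
Proof.
  move=> [p [N [sg [A [B [s0 [C0 [Hp [Hs0 [Hsg Hf]]]]]]]]]].
  set m := (Z.to_nat p).-1.
  have Em : m.+1 = Z.to_nat p by rewrite /m prednK //; apply/ssrnat.ltP; lia.
  pose St := ('I_m.+1 * 'I_m.+1)%type.
  pose enc := fun u : St => (Z.of_nat u.1, Z.of_nat u.2).
  pose dec := fun z : Z * Z => ((inord (Z.to_nat z.1) : 'I_m.+1), (inord (Z.to_nat z.2) : 'I_m.+1)).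
  have ED : forall z, inb p z -> enc (dec z) = z.
  { move=> [z1 z2] [/= H1 H2]. rewrite /enc /dec /= !inordK.
    - f_equal; lia.
    - apply/ssrnat.ltP. rewrite Em. lia.
    - apply/ssrnat.ltP. rewrite Em. lia. }
  have Hinb : forall u : St, inb p (enc u).
  { move=> [u1 u2]. rewrite /inb /enc /=.
    have /ssrnat.ltP H1 : (u1 < Z.to_nat p)%N by rewrite -Em; exact: ltn_ord.
    have /ssrnat.ltP H2 : (u2 < Z.to_nat p)%N by rewrite -Em; exact: ltn_ord.
    lia. }
  pose sg' := fun u => dec (sg (enc u)).
  pose A' := fun u => A (enc u). pose B' := fun u => B (enc u).
  have R : forall n, grun sg A B s0 C0 n = (enc (mrun sg' A' B' (dec s0) C0 n).1, (mrun sg' A' B' (dec s0) C0 n).2).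
  { elim=> [|n IH] /=. by rewrite ED.
    rewrite IH /=. rewrite /sg' ED //. apply: Hsg. apply: Hinb. }
  apply: (FR_prefix N _ _ (FR_machine _ sg' A' B' (dec s0) C0)) => n. by rewrite Hf R.
Qed.
Delimit Scope Z_scope with Z.
Definition iz (a : int) : Z := match a with Posz n => Z.of_nat n | Negz n => (- Z.of_nat n - 1)%Z end.
Lemma izN n : iz (Negz n) = (- Z.of_nat n - 1)%Z. Proof. by []. Qed.
Lemma izP n : iz (Posz n) = Z.of_nat n. Proof. by []. Qed.
Lemma Zneg_aux k : Z.neg (Pos.of_succ_nat k + 1) = (- Z.of_nat k - 2)%Z.
Proof. rewrite -Pos2Z.opp_pos Pos2Z.inj_add Zpos_P_of_succ_nat; lia. Qed.
Lemma iz_add a b : iz (a + b) = (iz a + iz b)%Z.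
Proof.
case: a => m; case: b => n; rewrite /GRing.add /= /intZmod.addz.
- rewrite -plusE; lia.
- case: ltnP => H; [move/ssrnat.ltP: H| move/ssrnat.leP: H] => H; rewrite ?izN ?izP -?minusE; lia.
- case: ltnP => H; [move/ssrnat.ltP: H| move/ssrnat.leP: H] => H; rewrite ?izN ?izP -?minusE; lia.
- rewrite Zneg_aux -plusE; lia.
Qed.
Lemma iz_opp a : iz (- a) = (- iz a)%Z.
Proof. case: a => [[|m]|m]; rewrite /GRing.opp /= /intZmod.oppz ?izN ?izP; lia. Qed.
Lemma iz_mul a b : iz (a * b) = (iz a * iz b)%Z.
Proof.
case: a => m; case: b => n; rewrite /GRing.mul /= /intRing.mulz ?izN ?izP -?multE; try lia.
- rewrite iz_opp izP; lia.
- rewrite iz_opp izP; lia.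
Qed.
Lemma iz_inj a b : iz a = iz b -> a = b.
Proof. case: a => m; case: b => n; rewrite ?izN ?izP => H; [congr Posz|exfalso|exfalso|congr Negz]; lia. Qed.
Lemma iz_le a b : (a <= b) <-> (iz a <= iz b)%Z.
Proof.
case: a => m; case: b => n; rewrite ?izN ?izP /Order.le /= /Num.le /=.
all: split; [try move/ssrnat.leP| try (move=> H; apply/ssrnat.leP)]; try lia; done.
Qed.
Lemma iz_lt a b : (a < b) <-> (iz a < iz b)%Z.
Proof.
rewrite lt_def; split.
- move/andP=> [H1 /iz_le H2]. have: iz b <> iz a by move=> /iz_inj E; rewrite E eqxx in H1. lia.
- move=> H; apply/andP; split; last (apply/iz_le; lia).
  apply/negP => /eqP E; subst; lia.
Qed.
Lemma iz_nat n : iz (n%:Z) = Z.of_nat n. Proof. by []. Qed.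
Lemma iz_0 : iz 0 = 0%Z. Proof. by []. Qed.
Lemma iz_1 : iz 1 = 1%Z. Proof. by []. Qed.
Lemma iz_mulrn a n : iz (a *+ n) = (Z.of_nat n * iz a)%Z.
Proof. elim: n => [|n IH]; rewrite ?mulr0n ?mulrS ?iz_add ?IH //; lia. Qed.
Lemma iz_sub a b : iz (a - b) = (iz a - iz b)%Z.
Proof. rewrite iz_add iz_opp; lia. Qed.
Definition zi (z : Z) : int := if (0 <=? z)%Z then Posz (Z.to_nat z) else Negz (Z.to_nat (- z - 1)).
Lemma iz_zi z : iz (zi z) = z.
Proof. rewrite /zi; case: Z.leb_spec0 => H; rewrite ?izN ?izP; lia. Qed.
Lemma zi_iz a : zi (iz a) = a.
Proof. apply: iz_inj; by rewrite iz_zi. Qed.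

Definition oth (c : letter) := match c with lx => ly | ly => lx end.
Lemma letter_oth (l c : letter) : l <> c -> l = oth c.
Proof. by case: l; case: c. Qed.

Lemma fwd_ex (x : frontier) (H : ~ fwd_ult_const x) (N : Z) (c : letter) :
  exists k, (N <= k)%Z /\ x (zi k) = c.
Proof.
  apply: NNPP => Hn. apply: H. exists (zi N), (oth c) => n Hn'.
  apply: letter_oth => E. apply: Hn. exists (iz n). rewrite zi_iz. split => //.
  move/iz_le: Hn'. by rewrite iz_zi.
Qed.
Lemma bwd_ex (x : frontier) (H : ~ bwd_ult_const x) (N : Z) (c : letter) :
  exists k, (k <= N)%Z /\ x (zi k) = c.
Proof.
  apply: NNPP => Hn. apply: H. exists (zi N), (oth c) => n Hn'.
  apply: letter_oth => E. apply: Hn. exists (iz n). rewrite zi_iz. split => //.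
  move/iz_le: Hn'. by rewrite iz_zi.
Qed.
Lemma zi_add a b : zi (a + b)%Z = zi a + zi b.
Proof. apply: iz_inj. by rewrite iz_add !iz_zi. Qed.
Lemma zi_1 : zi 1%Z = 1. Proof. by []. Qed.
Lemma zi_sub1 k : zi (k - 1)%Z = zi k - 1.
Proof. apply: iz_inj. rewrite iz_sub !iz_zi. by []. Qed.

Theorem corollary1 (x : frontier) (P : int -> point) (t : point -> nat)
  (Hadm : admissible x) (Hper : ult_periodic x)
  (Hemb : embedding x P) (Ht : SL2_tiling t) (Hext : extends t P)
  (Q v : point) (Hv : v != (0, 0)) (Hab : v.1 * v.2 <= 0) :
  N_rational (fun n : nat => t (padd Q (pscale n v))).
Proof.
  pose xz := fun k : Z => x (zi k).
  pose Pz := fun k : Z => (iz (P (zi k)).1, iz (P (zi k)).2).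
  pose tz := fun q : (Z * Z)%type => t (zi q.1, zi q.2).
  have Hemb' : forall k, Pz k = (fst (Pz (k-1)%Z) + dxl (xz k), snd (Pz (k-1)%Z) + dyl (xz k))%Z.
  { move=> k. rewrite /Pz /xz /= (Hemb (zi k)) zi_sub1 /padd /=.
    case: (x (zi k)) => /=; rewrite !iz_add /=; f_equal; lia. }
  have Hinf' : forall N, (exists k, (N <= k)%Z /\ xz k = lx) /\ (exists k, (N <= k)%Z /\ xz k = ly)
     /\ (exists k, (k <= N)%Z /\ xz k = lx) /\ (exists k, (k <= N)%Z /\ xz k = ly).
  { move: Hadm => [H1 H2] N. split; [|split; [|split]]; by [apply: fwd_ex | apply: bwd_ex]. }
  have Hsl2' : forall a b : Z, Nat.mul (tz (a, b+1)%Z) (tz (a+1, b)%Z) = S (Nat.mul (tz (a,b)) (tz (a+1, b+1)%Z)).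
  { move=> a b. rewrite /tz /= !zi_add zi_1.
    have := Ht (zi a) (zi b). move/(congr1 iz). rewrite iz_sub !iz_mul !iz_nat ?iz_1 => E.
    have E' : (Z.of_nat (t (zi a, (zi b + 1)%R)) * Z.of_nat (t ((zi a + 1)%R, zi b))
      - Z.of_nat (t (zi a, zi b)) * Z.of_nat (t ((zi a + 1)%R, (zi b + 1)%R)) = Z.of_nat 1)%Z := E.
    apply: Nat2Z.inj. rewrite Nat2Z.inj_succ !Nat2Z.inj_mul.
    move: E'. set A1 := Z.of_nat _. set A2 := Z.of_nat _. set A3 := Z.of_nat _. set A4 := Z.of_nat _. nia. }
  have Hext' : forall k, tz (Pz k) = 1%N.
  { move=> k. rewrite /tz /Pz /= !zi_iz. rewrite -surjective_pairing. apply: Hext. }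
  move: Hper => [p [n0 [n0' [Hp [Hf Hb]]]]].
  have Hfwd' : forall n, (iz n0 <= n)%Z -> xz n = xz (n + Z.of_nat p)%Z.
  { move=> n Hn. rewrite /xz zi_add. have -> : zi (Z.of_nat p) = p%:Z by apply: iz_inj; rewrite iz_zi iz_nat.
    apply: Hf. apply/iz_le. by rewrite iz_zi. }
  have Hbwd' : forall n, (n <= iz n0')%Z -> xz n = xz (n - Z.of_nat p)%Z.
  { move=> n Hn. rewrite /xz. have -> : zi (n - Z.of_nat p)%Z = zi n - p%:Z.
    { apply: iz_inj. by rewrite iz_sub !iz_zi iz_nat. }
    apply: Hb. apply/iz_le. by rewrite iz_zi. }
  have Hp' : (1 <= Z.of_nat p)%Z by move/ssrnat.leP: Hp; lia.
  have Hv' : iz v.1 <> 0%Z \/ iz v.2 <> 0%Z.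
  { apply: NNPP => H. move/negP: Hv; apply. apply/eqP.
    have E1 : v.1 = 0 by apply: iz_inj; rewrite iz_0; lia.
    have E2 : v.2 = 0 by apply: iz_inj; rewrite iz_0; lia.
    by rewrite [v]surjective_pairing E1 E2. }
  have Hvv' : (iz v.1 * iz v.2 <= 0)%Z by move/iz_le: Hab; rewrite iz_mul iz_0.
  have R := ray_Z xz Pz tz Hemb' Hinf' Hsl2' Hext' (Z.of_nat p) (iz n0) (iz n0') Hp' Hfwd' Hbwd'
     (iz Q.1) (iz Q.2) (iz v.1) (iz v.2) Hv' Hvv'.
  apply: FR_N_rational. apply: FR_auto.
  suff -> : (fun n : nat => t (padd Q (pscale n v))) =
            (fun n : nat => tz (iz Q.1 + Z.of_nat n * iz v.1, iz Q.2 + Z.of_nat n * iz v.2)%Z) by [].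
  apply: functional_extensionality => n. rewrite /tz /padd /pscale /=.
  congr (t (_, _)); apply: iz_inj; rewrite iz_zi iz_add iz_mulrn; lia.
Qed.
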